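(* Let $\mathbb{K}$ be a field of characteristic zero and $x$ an indeterminate. For every $k\ge1$ the algebra of $\mathbb{Z}_2$-relations $A^{\mathbb{Z}_2}_k(x)$ over $\mathbb{K}(x)$ is semisimple.
   Context: The partition algebra $A_n(x)$ is the $\mathbb{K}(x)$-vector space with basis the set partitions of $\{1,\dots,n\}\cup\{1',\dots,n'\}$, with multiplication $d_1\cdot d_2=x^{l}d_3$, where $d_3$ is obtained by placing $d_1$ above $d_2$, identifying the bottom vertices of $d_1$ with the top vertices of $d_2$, taking the induced partition of the outer two rows, and $l$ is the number of connected components lying entirely in the middle row. Let $\mathbb{Z}_2=\{e,g\}$ act on $X=(\{1,\dots,k\}\cup\{1',\dots,k'\})\times\mathbb{Z}_2$ by $h\cdot(i,a)=(i,ha)$; a set partition of $X$ is $\mathbb{Z}_2$-stable if $g$ maps each block to a block. Identifying $(i,e)\mapsto 2i-1$ and $(i,g)\mapsto 2i$ (and similarly for primed vertices), $\mathbb{Z}_2$-stable partitions of $X$ become $2k$-partition diagrams. $A^{\mathbb{Z}_2}_k(x)$ is the $\mathbb{K}(x)$-linear span of the $\mathbb{Z}_2$-stable partitions of $X$ inside $A_{2k}(x)$; it is a subalgebra. *)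

(* Defs.v *)
From HB Require Import structures.
From mathcomp Require Import all_boot all_order all_algebra.
Set Implicit Arguments. Unset Strict Implicit. Unset Printing Implicit Defensive.
Import Order.TTheory GRing.Theory Num.Theory.
Local Open Scope ring_scope.

(* Vertices of an n-partition diagram: inl i = top vertex i, inr i = bottom vertex i'. *)
Definition vtx (n : nat) := ('I_n + 'I_n)%type.
Definition diagram (n : nat) := {set {set vtx n}}.
Definition is_diagram (n : nat) (d : diagram n) : bool := partition d [set: vtx n].

Definition same_block (T : finType) (P : {set {set T}}) (a b : T) : bool :=
  pblock P a == pblock P b.

(* Three stacked rows: row 0 = top of d1, row 1 = middle (bottom of d1 = top of d2),
   row 2 = bottom of d2. *)
Definition wvtx (n : nat) := ('I_3 * 'I_n)%type.

Definition emb1 (n : nat) (w : wvtx n) : option (vtx n) :=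
  match val w.1 with 0%N => Some (inl w.2) | 1%N => Some (inr w.2) | _ => None end.
Definition emb2 (n : nat) (w : wvtx n) : option (vtx n) :=
  match val w.1 with 1%N => Some (inl w.2) | 2%N => Some (inr w.2) | _ => None end.

Definition cedge (n : nat) (d1 d2 : diagram n) : rel (wvtx n) := fun u v =>
  (match emb1 u, emb1 v with Some a, Some b => same_block d1 a b | _, _ => false end)
  || (match emb2 u, emb2 v with Some a, Some b => same_block d2 a b | _, _ => false end).

Definition outer (n : nat) (v : vtx n) : wvtx n :=
  match v with inl i => (@ord0 2, i) | inr i => (@ord_max 2, i) end.

Definition dcomp (n : nat) (d1 d2 : diagram n) : diagram n :=
  [set [set v | connect (cedge d1 d2) (outer v0) (outer v)] | v0 : vtx n].

Definition nloops (n : nat) (d1 d2 : diagram n) : nat :=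
  #|[set [set w | connect (cedge d1 d2) w0 w] | w0 in
      [pred w0 : wvtx n | [forall w, connect (cedge d1 d2) w0 w ==> (val w.1 == 1%N)]]]|.

(* Ambient space: F-valued coordinate functions on diagram candidates; the partition
   algebra A_n(x) is the subspace of those supported on genuine diagrams. *)
Notation PA F n := {ffun diagram n -> F^o}.

(* d1 . d2 = x^l d3, extended bilinearly. *)
Definition pa_mul (F : fieldType) (n : nat) (x : F) (f g : PA F n) : PA F n :=
  [ffun d => \sum_(d1 : diagram n) \sum_(d2 : diagram n)
     (if dcomp d1 d2 == d then f d1 * g d2 * x ^+ nloops d1 d2 else 0)].

(* Z_2 action: with (i,e) |-> 2i-1, (i,g) |-> 2i (1-indexed), i.e. 0-indexed
   g swaps 2i and 2i+1. *)
Definition gsw (n : nat) (j : 'I_n) : 'I_n :=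
  insubd j (if odd j then j.-1 else j.+1).
Definition gact (n : nat) (v : vtx n) : vtx n :=
  match v with inl i => inl (gsw i) | inr i => inr (gsw i) end.
Definition z2_stable (n : nat) (d : diagram n) : bool :=
  [forall B in d, [set gact v | v in B] \in d].

Definition z2_alg (F : fieldType) (k : nat) : pred (PA F k.*2) :=
  fun f => [forall d, (f d != 0) ==> (is_diagram d && z2_stable d)].

(* Semisimplicity of a (finite-dimensional) subalgebra S of an ambient space V
   with multiplication mul: it has no nonzero nilpotent two-sided ideal
   (i.e. its Jacobson radical is zero). *)
Definition is_ideal (F : fieldType) (V : lmodType F) (S : pred V) (mul : V -> V -> V)
  (I : V -> Prop) : Prop :=
  [/\ (forall a, I a -> S a), I 0, (forall a b, I a -> I b -> I (a + b)),
      (forall (c : F) a, I a -> I (c *: a)) &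
      (forall a b, S a -> I b -> I (mul a b) /\ I (mul b a))].

Definition nilpotent_ideal (F : fieldType) (V : lmodType F) (mul : V -> V -> V)
  (I : V -> Prop) : Prop :=
  exists m : nat, forall (a : V) (s : seq V), size s = m -> I a ->
    (forall b, b \in s -> I b) -> foldl mul a s = 0.

Definition semisimple (F : fieldType) (V : lmodType F) (S : pred V)
  (mul : V -> V -> V) : Prop :=
  forall I : V -> Prop, is_ideal S mul I -> nilpotent_ideal mul I ->
    forall a, I a -> a = 0.

Definition xK (K : fieldType) : {fraction {poly K}} := FracField.tofrac 'X.

(* Main.v *)
Require Import Defs.
From HB Require Import structures.
From mathcomp Require Import all_boot all_order all_algebra generic_quotient.
From mathcomp Require Import zify.
Import GRing.Theory.

(* Proof strategy: for every N, diagrams act on (K^N)^{(x)n} by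
   0/1 matrices (labelings constant on blocks); composition becomes matrix product
   with x specialised to N.  A nilpotent ideal gives traceless elements, so the
   polynomial sum_d p_d X^{kappa(e,d)} vanishes for every stable diagram e; a
   leading-degree argument on this Gram-type matrix then forces p = 0. *)

Set Implicit Arguments. Unset Strict Implicit. Unset Printing Implicit Defensive.

Definition rcompat (T : finType) (r : rel T) (N : nat) (L : {ffun T -> 'I_N}) : bool :=
  [forall u, forall v, r u v ==> (L u == L v)].

Definition Eset (T : finType) (r : rel T) (O : {set T}) (N : nat) (o : T -> 'I_N) :=
  [set L : {ffun T -> 'I_N} | rcompat r L && [forall x in O, L x == o x]].

Definition LRset (T : finType) (r : rel T) (O : {set T}) : {set T} :=
  [set s | (fingraph.root r s == s) && [forall w, connect r s w ==> (w \notin O)]].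

Definition consb (T : finType) (r : rel T) (O : {set T}) (N : nat) (o : T -> 'I_N) :=
  [forall x in O, forall y in O, connect r x y ==> (o x == o y)].

Lemma rcompat_connect (T : finType) (r : rel T) N (L : {ffun T -> 'I_N}) u v :
  rcompat r L -> connect r u v -> L u = L v.
Proof.
move=> /forallP H /connectP [p pth ->] {v}.
elim: p u pth => //= w p IH u /andP [ruw pth].
by rewrite -(IH w pth); apply/eqP; exact: (implyP (forallP (H u) w) ruw).
Qed.

Lemma count_compat (T : finType) (r : rel T) (O : {set T}) N (o : T -> 'I_N) :
  symmetric r ->
  #|Eset r O o| = if consb r O o then N ^ #|LRset r O| else 0.
Proof.
move=> rsym.
have csym : connect_sym r by apply: sym_connect_sym.
case: ifP => [cons | ncons]; last first.
  apply/eqP; rewrite cards_eq0; apply/eqP/setP => L; rewrite !inE.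
  apply/negP => /andP [cL /forall_inP oL]; move/negP: ncons; apply.
  apply/forall_inP => x xO; apply/forall_inP => y yO; apply/implyP => cxy.
  by rewrite -(eqP (oL x xO)) -(eqP (oL y yO)) (rcompat_connect cL cxy).
pose S := {x | x \in LRset r O}.
pose pk x := [pick w in O | connect r (fingraph.root r x) w].
pose psi (g : {ffun S -> 'I_N}) : {ffun T -> 'I_N} :=
  [ffun x => if insub (fingraph.root r x) is Some s then g s
             else if pk x is Some w then o w else o (fingraph.root r x)].
have psi_inj : injective psi.
  move=> g1 g2 /ffunP E; apply/ffunP => s; move: (E (val s)); rewrite !ffunE.
  have rs : fingraph.root r (val s) = val s by move: (valP s); rewrite inE => /andP [/eqP].
  by rewrite rs valK.
suff -> : Eset r O o = psi @: setT.
  by rewrite card_imset // cardsT card_ffun card_ord card_sig.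
apply/setP => L; rewrite inE; apply/idP/imsetP.
- case/andP => cL /forall_inP oL.
  exists [ffun s => L (val s)]; first by rewrite inE.
  apply/ffunP => x; rewrite !ffunE.
  case: insubP => [s _ vs | nLR]; first by rewrite ffunE vs; apply: rcompat_connect cL _; exact: fingraph.connect_root.
  rewrite /pk; case: pickP => [w /andP [wO cw] | none].
    rewrite -(eqP (oL w wO)); apply: rcompat_connect cL _.
    exact: connect_trans (fingraph.connect_root _ _) cw.
  exfalso; move: nLR; rewrite inE (fingraph.root_root csym) eqxx /=; move/negP; apply.
  apply/forallP => w; apply/implyP => cw; apply/negP => wO.
  by move: (none w); rewrite wO cw.
- case=> g _ ->; apply/andP; split.
  + apply/forallP => u; apply/forallP => v; apply/implyP => ruv.
    have cuv : connect r u v by apply: connect1.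
    rewrite !ffunE /pk (fingraph.rootP csym cuv) //.
  + apply/forall_inP => x xO; rewrite ffunE.
    case: insubP => [s sLR vs | _].
      exfalso; move: sLR; rewrite inE => /andP [_ /forallP /(_ x)].
      by rewrite xO implybF csym fingraph.connect_root.
    rewrite /pk; case: pickP => [w /andP [wO cw] | none].
      have cxw : connect r x w by apply: connect_trans (fingraph.connect_root _ _) cw.
      by rewrite eq_sym; exact: (implyP (forall_inP (forall_inP cons x xO) w wO) cxw).
    by move: (none x); rewrite xO csym fingraph.connect_root.
Qed.

Definition Cset (T : finType) (r : rel T) (N : nat) := [set L : {ffun T -> 'I_N} | rcompat r L].
Definition ex (T : finType) (r : rel T) := #|LRset r set0|.

Lemma count_C (T : finType) (r : rel T) N : symmetric r -> #|Cset r N.+1| = N.+1 ^ ex r.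
Proof.
move=> rsym; have := count_compat set0 (fun _ : T => (ord0 : 'I_N.+1)) rsym.
have -> : consb r set0 (fun _ : T => (ord0 : 'I_N.+1)) by apply/forall_inP => x; rewrite inE.
move=> <-; apply: eq_card => L; rewrite !inE.
by case: (rcompat r L) => //=; apply/esym/forall_inP => x; rewrite inE.
Qed.

Lemma ex_le (T : finType) (r1 r2 : rel T) : symmetric r1 -> symmetric r2 ->
  (forall L : {ffun T -> 'I_2}, rcompat r1 L -> rcompat r2 L) -> ex r1 <= ex r2.
Proof.
move=> s1 s2 H; rewrite -(@leq_exp2l 2) // -!(count_C 1) //.
by apply: subset_leq_card; apply/subsetP => L; rewrite !inE; apply: H.
Qed.

Lemma ex_eq_back (T : finType) (r1 r2 : rel T) : symmetric r1 -> symmetric r2 ->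
  (forall L : {ffun T -> 'I_2}, rcompat r1 L -> rcompat r2 L) -> ex r1 = ex r2 ->
  forall L : {ffun T -> 'I_2}, rcompat r2 L -> rcompat r1 L.
Proof.
move=> s1 s2 H E L.
have sub : Cset r1 2 \subset Cset r2 2 by apply/subsetP => L'; rewrite !inE; apply: H.
have ce : #|Cset r1 2| = #|Cset r2 2| by rewrite !(count_C 1) // E.
by move: (subset_cardP ce sub L); rewrite !inE => ->.
Qed.
Lemma class_count (T : finType) (r : rel T) (Q : pred T) : symmetric r ->
  #|[set [set w | connect r w0 w] | w0 in [pred w0 | [forall w, connect r w0 w ==> Q w]]]|
  = #|[set s | (fingraph.root r s == s) && [forall w, connect r s w ==> Q w]]|.
Proof.
move=> rsym; have csym : connect_sym r by apply: sym_connect_sym.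
set R := [set s | _ && _].
have eqc : forall w0, connect r w0 =1 connect r (fingraph.root r w0).
  by move=> w0; apply: (same_connect csym); exact: fingraph.connect_root.
have -> : [set [set w | connect r w0 w] | w0 in [pred w0 | [forall w, connect r w0 w ==> Q w]]]
  = [set [set w | connect r w0 w] | w0 in R].
  apply/setP => B; apply/imsetP/imsetP => [[w0 Pw0 ->] | [s sR ->]].
  - exists (fingraph.root r w0).
      rewrite inE (fingraph.root_root csym) eqxx /=; apply/forallP => w.
      by rewrite -eqc; exact: (forallP Pw0 w).
    by apply/setP => w; rewrite !inE eqc.
  - by exists s => //; move: sR; rewrite inE => /andP [].
rewrite card_in_imset // => s1 s2 s1R s2R /setP /(_ s2).
rewrite !inE connect0 => c12.
move: s1R s2R; rewrite !inE => /andP [/eqP <- _] /andP [/eqP <- _].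
by apply/(fingraph.rootP csym).
Qed.
Definition bc (T : finType) (P : {set {set T}}) N (L : {ffun T -> 'I_N}) :=
  [forall B in P, forall u in B, forall v in B, L u == L v].

Lemma in_pblockE (T : finType) (P : {set {set T}}) u v : partition P [set: T] ->
  (u \in pblock P v) = (pblock P u == pblock P v).
Proof.
case/and3P => /eqP cP tP _; apply/idP/eqP => [uin | e].
  by apply: def_pblock => //; apply: pblock_mem; rewrite cP inE.
by rewrite -e mem_pblock cP inE.
Qed.

Lemma pblock_sub (T : finType) (P Q : {set {set T}}) :
  partition P [set: T] -> partition Q [set: T] ->
  (forall L : {ffun T -> 'I_2}, bc P L -> bc Q L) -> forall v, pblock Q v \subset pblock P v.
Proof.
move=> pP pQ H v.
pose L := [ffun u => if u \in pblock P v then (@ord_max 1) else ord0].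
have bP : bc P L.
  apply/forall_inP => B BP; apply/forall_inP => u uB; apply/forall_inP => w wB.
  case/and3P: (pP) => _ tP _.
  by rewrite !ffunE (in_pblockE u v pP) (in_pblockE w v pP) (def_pblock tP BP uB) (def_pblock tP BP wB).
have := H L bP; move/forall_inP => bQ.
case/and3P: (pQ) => /eqP cQ tQ _.
have vQ : v \in pblock Q v by rewrite mem_pblock cQ inE.
have QQ : pblock Q v \in Q by apply: pblock_mem; rewrite cQ inE.
apply/subsetP => x xQ.
move: (forall_inP (forall_inP (bQ _ QQ) x xQ) v vQ).
have vP : v \in pblock P v by case/and3P: pP => /eqP cP _ _; rewrite mem_pblock cP inE.
rewrite !ffunE vP; case: (x \in pblock P v) => //.
Qed.

Lemma part_eq (T : finType) (P Q : {set {set T}}) :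
  partition P [set: T] -> partition Q [set: T] ->
  (forall L : {ffun T -> 'I_2}, bc P L = bc Q L) -> P = Q.
Proof.
move=> pP pQ H.
have e : forall v, pblock P v = pblock Q v.
  move=> v; apply/eqP; rewrite eqEsubset.
  rewrite (pblock_sub pQ pP) ?(pblock_sub pP pQ) // => L; rewrite H //.
have sub : forall (P Q : {set {set T}}), partition P [set: T] -> partition Q [set: T] ->
   (forall v, pblock P v = pblock Q v) -> P \subset Q.
  move=> P' Q' pP' pQ' e'; apply/subsetP => B BP.
  case/and3P: (pP') => /eqP cP tP nP.
  have : B != set0 by apply: contraNneq nP => <-.
  case/set0Pn => v vB.
  have <- : pblock P' v = B by apply: def_pblock.
  rewrite e'; case/and3P: pQ' => /eqP cQ _ _; apply: pblock_mem; rewrite cQ inE //.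
apply/eqP; rewrite eqEsubset (sub P Q) ?(sub Q P) //.
Qed.

Open Scope ring_scope.


Lemma nil_trace (K : fieldType) n (A : 'M[K]_n) m :
  iter m (fun B => B *m A) A = 0 -> \tr A = 0.
Proof.
case: n A => [|n] A H; first by rewrite /mxtrace big_ord0.
have Am : A ^+ m.+1 = 0.
  rewrite -H; elim: m {H} => [|m IH]; first by rewrite expr1.
  by rewrite iterS -IH exprSr.
set p := char_poly A.
have dv : p %| ('X - 0%:P) ^+ (m.+1 * n.+1).
  rewrite subr0 exprM.
  pose Xm : 'M[{poly K}]_n.+1 := 'X%:M.
  pose Ap : 'M[{poly K}]_n.+1 := map_mx polyC A.
  have cm : GRing.comm Xm Ap by rewrite /GRing.comm /Xm -!mulmxE scalar_mxC.
  have := subrXX_comm m.+1 cm.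
  have -> : Ap ^+ m.+1 = 0 by rewrite /Ap -rmorphXn /= Am map_mx0.
  rewrite subr0 => e.
  have -> : 'X ^+ m.+1 ^+ n.+1 = \det (Xm ^+ m.+1).
    by rewrite /Xm -rmorphXn /= det_scalar.
  rewrite e -mulmxE det_mulmx; exact: dvdp_mulIl.
case/dvdp_exp_XsubCP: dv => k _ ek.
have mk : ('X - (0 : K)%:P) ^+ k \is monic by apply: monic_exp; rewrite monicXsubC.
have pk : p = ('X - (0 : K)%:P) ^+ k by apply/eqP; rewrite -eqp_monic ?char_poly_monic.
have kn : k = n.+1.
  have := size_char_poly A; rewrite -/p pk subr0 size_polyXn; case.
  done.
have := char_poly_trace A (ltn0Sn n); rewrite -/p pk kn subr0 coefXn.
rewrite eqn_leq ltnn andbF /= => /esym/eqP; rewrite oppr_eq0 => /eqP -> //.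
Qed.

Lemma natr_inj0 (K : fieldType) : [pchar K] =i pred0 -> injective (fun i : nat => i%:R : K).
Proof.
move/pcharf0P => ch i j /= e.
wlog lij : i j e / (i <= j)%N.
  by move=> W; case: (leqP i j) => [|/ltnW] h; [apply: W | apply/esym/W].
have : (j - i)%:R == 0 :> K by rewrite natrB // e subrr.
by rewrite ch subn_eq0 => h; apply/eqP; rewrite eqn_leq lij h.
Qed.

Lemma poly_nat_roots (K : fieldType) (P : {poly K}) : [pchar K] =i pred0 ->
  (forall i : nat, P.[i.+1%:R] = 0) -> P = 0.
Proof.
move=> ch H.
apply: (@roots_geq_poly_eq0 _ P [seq (i.+1)%:R | i <- iota 0 (size P)]).
- by apply/allP => x /mapP [i _ ->]; apply/rootP.
- rewrite map_inj_uniq ?iota_uniq // => i j /natr_inj0 - /(_ ch); case.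
  done.
- by rewrite size_map size_iota.
Qed.

Close Scope ring_scope.

Definition coblock (T : finType) (P : {set {set T}}) (u v : T) : bool :=
  [exists B in P, (u \in B) && (v \in B)].

Lemma rcompat_coblock (T : finType) (P : {set {set T}}) N (L : {ffun T -> 'I_N}) :
  rcompat (coblock P) L = bc P L.
Proof.
apply/forallP/forall_inP => [H B BP | H u].
  apply/forall_inP => u uB; apply/forall_inP => v vB.
  by apply: (implyP (forallP (H u) v)); apply/exists_inP; exists B => //; rewrite uB vB.
apply/forallP => v; apply/implyP => /exists_inP [B BP /andP [uB vB]].
exact: (forall_inP (forall_inP (H B BP) u uB) v vB).
Qed.

Lemma rcompatU (T : finType) (r1 r2 : rel T) N (L : {ffun T -> 'I_N}) :
  rcompat (fun u v => r1 u v || r2 u v) L = rcompat r1 L && rcompat r2 L.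
Proof.
apply/forallP/andP => [H | [/forallP H1 /forallP H2] u].
  split; apply/forallP => u; apply/forallP => v; apply/implyP => ruv;
  by apply: (implyP (forallP (H u) v)); rewrite ruv ?orbT.
apply/forallP => v; apply/implyP => /orP [ruv | ruv].
  exact: (implyP (forallP (H1 u) v)).
exact: (implyP (forallP (H2 u) v)).
Qed.

Lemma rcompat_comp (T : finType) (r : rel T) (f : T -> T) N (L : {ffun T -> 'I_N}) :
  involutive f ->
  rcompat (fun u v => r (f u) (f v)) L = rcompat r [ffun v => L (f v)].
Proof.
move=> fK; apply/forallP/forallP => H u.
  apply/forallP => v; apply/implyP => ruv; rewrite !ffunE.
  by apply: (implyP (forallP (H (f u)) (f v))); rewrite !fK.
apply/forallP => v; apply/implyP => ruv.
by move: (implyP (forallP (H (f u)) (f v)) ruv); rewrite !ffunE !fK.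
Qed.

Lemma bc_sb (T : finType) (P : {set {set T}}) N (L : {ffun T -> 'I_N}) :
  partition P [set: T] ->
  bc P L = [forall a, forall b, same_block P a b ==> (L a == L b)].
Proof.
case/and3P => /eqP cP tP _.
apply/forall_inP/forallP => [H a | H B BP].
  apply/forallP => b; apply/implyP => /eqP sab.
  have aP : a \in pblock P a by rewrite mem_pblock cP inE.
  have bP : b \in pblock P a by rewrite sab mem_pblock cP inE.
  have PP : pblock P a \in P by apply: pblock_mem; rewrite cP inE.
  exact: (forall_inP (forall_inP (H _ PP) a aP) b bP).
apply/forall_inP => u uB; apply/forall_inP => v vB.
apply: (implyP (forallP (H u) v)).
by rewrite /same_block (def_pblock tP BP uB) (def_pblock tP BP vB).
Qed.

Definition Lab n N := {ffun 'I_n -> 'I_N}.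
Definition labf n N (i j : Lab n N) : {ffun vtx n -> 'I_N} :=
  [ffun v => match v with inl t => i t | inr t => j t end].
Definition chi n N (d : diagram n) (i j : Lab n N) := bc d (labf i j).

Definition r1 : 'I_3 := Ordinal (isT : 1 < 3).
Definition Lm n N (i m j : Lab n N) : {ffun wvtx n -> 'I_N} :=
  [ffun w => if val w.1 == 0 then i w.2 else if val w.1 == 1 then m w.2 else j w.2].
Definition w1 n (a : vtx n) : wvtx n := match a with inl t => (ord0, t) | inr t => (r1, t) end.
Definition w2 n (a : vtx n) : wvtx n := match a with inl t => (r1, t) | inr t => (ord_max, t) end.

Lemma emb1_w1 n (a : vtx n) : emb1 (w1 a) = Some a. Proof. by case: a. Qed.
Lemma emb2_w2 n (a : vtx n) : emb2 (w2 a) = Some a. Proof. by case: a. Qed.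

Lemma emb1_Lm n N (i m j : Lab n N) w a : emb1 w = Some a -> Lm i m j w = labf i m a.
Proof.
case: w => [[[|[|[|k]]] lt] t]; rewrite /emb1 /= => // [[<-]]; by rewrite !ffunE.
Qed.

Lemma emb2_Lm n N (i m j : Lab n N) w a : emb2 w = Some a -> Lm i m j w = labf m j a.
Proof.
case: w => [[[|[|[|k]]] lt] t]; rewrite /emb2 /= => // [[<-]]; by rewrite !ffunE.
Qed.

Lemma cedge_sym n (d1 d2 : diagram n) : symmetric (cedge d1 d2).
Proof.
move=> u v; rewrite /cedge.
case: (emb1 u) => [a|]; case: (emb1 v) => [b|]; case: (emb2 u) => [c|]; case: (emb2 v) => [e|] //=;
by rewrite /same_block ?[pblock _ b == _]eq_sym ?[pblock _ e == _]eq_sym.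
Qed.

Lemma cedge_compat n N (d1 d2 : diagram n) (i m j : Lab n N) :
  is_diagram d1 -> is_diagram d2 ->
  rcompat (cedge d1 d2) (Lm i m j) = chi d1 i m && chi d2 m j.
Proof.
move=> D1 D2; rewrite /chi (bc_sb _ D1) (bc_sb _ D2).
apply/forallP/andP => [H | [/forallP H1 /forallP H2] u].
  split; apply/forallP => a; apply/forallP => b; apply/implyP => sab.
    have := implyP (forallP (H (w1 a)) (w1 b)).
    by rewrite /cedge !emb1_w1 sab (emb1_Lm _ _ _ (emb1_w1 a)) (emb1_Lm _ _ _ (emb1_w1 b)); apply.
  have := implyP (forallP (H (w2 a)) (w2 b)).
  by rewrite /cedge !emb2_w2 sab orbT (emb2_Lm _ _ _ (emb2_w2 a)) (emb2_Lm _ _ _ (emb2_w2 b)); apply.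
apply/forallP => v.
have F1 : forall a b, emb1 u = Some a -> emb1 v = Some b -> same_block d1 a b ->
   Lm i m j u == Lm i m j v.
  by move=> a b Eu Ev sab; rewrite (emb1_Lm _ _ _ Eu) (emb1_Lm _ _ _ Ev); exact: (implyP (forallP (H1 a) b) sab).
have F2 : forall a b, emb2 u = Some a -> emb2 v = Some b -> same_block d2 a b ->
   Lm i m j u == Lm i m j v.
  by move=> a b Eu Ev sab; rewrite (emb2_Lm _ _ _ Eu) (emb2_Lm _ _ _ Ev); exact: (implyP (forallP (H2 a) b) sab).
apply/implyP; rewrite /cedge.
case E1u: (emb1 u) => [a|]; case E1v: (emb1 v) => [b|];
case E2u: (emb2 u) => [c|]; case E2v: (emb2 v) => [e|] //=; rewrite ?orbF;
try (by move=> sab; apply: (F1 _ _ E1u E1v)); try (by move=> sce; apply: (F2 _ _ E2u E2v));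
by move/orP => [sab | sce]; [apply: (F1 _ _ E1u E1v) | apply: (F2 _ _ E2u E2v)].
Qed.

Definition Oset n : {set wvtx n} := [set w | val w.1 != 1].
Definition oo n N (i j : Lab n N) (w : wvtx n) : 'I_N := if val w.1 == 0 then i w.2 else j w.2.

Lemma Lm_inj n N (i j : Lab n N) : injective (fun m => Lm i m j).
Proof.
move=> m1 m2 /ffunP E; apply/ffunP => t; move: (E (r1, t)); by rewrite !ffunE.
Qed.

Lemma card_mid n N (d1 d2 : diagram n) (i j : Lab n N) :
  is_diagram d1 -> is_diagram d2 ->
  #|[set m : Lab n N | chi d1 i m && chi d2 m j]| = #|Eset (cedge d1 d2) (Oset n) (oo i j)|.
Proof.
move=> D1 D2; rewrite -(card_imset _ (@Lm_inj n N i j)); apply: eq_card => L.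
apply/imsetP/idP => [[m] | ].
  rewrite inE -cedge_compat // => cm ->; rewrite inE cm /=.
  apply/forall_inP => w wO; rewrite ffunE /oo; case: ifP => // _; by move: wO; rewrite inE => /negbTE ->.
rewrite inE => /andP [cL /forall_inP oL].
exists [ffun t => L (r1, t)]; last first.
  apply/ffunP => -[[[|[|[|k]]] lt] t]; rewrite !ffunE /=.
  - by rewrite (eqP (oL _ _)) // inE.
  - by congr (L (_, t)); apply: val_inj.
  - by rewrite (eqP (oL _ _)) // inE.
  - done.
rewrite inE -cedge_compat //.
suff <- : L = Lm i [ffun t => L (r1, t)] j by [].
apply/ffunP => -[[[|[|[|k]]] lt] t]; rewrite !ffunE /=.
- by rewrite (eqP (oL _ _)) // inE.
- by congr (L (_, t)); apply: val_inj.
- by rewrite (eqP (oL _ _)) // inE.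
- done.
Qed.

Lemma oo_outer n N (i j : Lab n N) v : oo i j (outer v) = labf i j v.
Proof. by case: v => t; rewrite /oo ffunE. Qed.

Lemma outer_O n (v : vtx n) : outer v \in Oset n.
Proof. by case: v => t; rewrite inE. Qed.

Lemma O_outer n (w : wvtx n) : w \in Oset n -> exists v, w = outer v.
Proof.
case: w => [[[|[|[|k]]] lt] t]; rewrite inE //= => _.
- by exists (inl t); congr (_, _); apply: val_inj.
- by exists (inr t); congr (_, _); apply: val_inj.
Qed.

Lemma consb_chi n N (d1 d2 : diagram n) (i j : Lab n N) :
  consb (cedge d1 d2) (Oset n) (oo i j) = chi (dcomp d1 d2) i j.
Proof.
have csym : connect_sym (cedge d1 d2) by apply: sym_connect_sym; apply: cedge_sym.
apply/forall_inP/forall_inP => [H B /imsetP [v0 _ ->] | H x xO].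
  apply/forall_inP => u; rewrite inE => cu; apply/forall_inP => v; rewrite inE => cv.
  have cuv : connect (cedge d1 d2) (outer u) (outer v).
    by apply: connect_trans cv; rewrite csym.
  move: (implyP (forall_inP (H _ (outer_O u)) _ (outer_O v)) cuv).
  by rewrite !ffunE !oo_outer !ffunE.
apply/forall_inP => y yO; apply/implyP => cxy.
case: (O_outer xO) => u xu; case: (O_outer yO) => v yv; subst x y.
have Bin : [set v' | connect (cedge d1 d2) (outer u) (outer v')] \in dcomp d1 d2.
  by apply/imsetP; exists u.
have uB : u \in [set v' | connect (cedge d1 d2) (outer u) (outer v')] by rewrite inE connect0.
have vB : v \in [set v' | connect (cedge d1 d2) (outer u) (outer v')] by rewrite inE.
move: (forall_inP (forall_inP (H _ Bin) u uB) v vB).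
by rewrite !oo_outer !ffunE.
Qed.

Lemma LR_nloops n (d1 d2 : diagram n) :
  #|LRset (cedge d1 d2) (Oset n)| = nloops d1 d2.
Proof.
rewrite /nloops (class_count _ (cedge_sym d1 d2)); apply: eq_card => s.
rewrite !inE; congr (_ && _); apply: eq_forallb => w; by rewrite inE negbK.
Qed.

Open Scope ring_scope.

Definition rho (K : fieldType) n N (d : diagram n) : 'M[K]_#|{: Lab n N}| :=
  \matrix_(a, b) ((chi d (enum_val a) (enum_val b))%:R).

Lemma sum_enum (K : fieldType) (T : finType) (F : T -> K) :
  \sum_(c < #|{: T}|) F (enum_val c) = \sum_x F x.
Proof. by rewrite -big_enum_val. Qed.

Lemma sum_bool (K : fieldType) (T : finType) (P : pred T) :
  \sum_x ((P x)%:R : K) = #|[set x | P x]|%:R.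
Proof.
rewrite (eq_bigr (fun x => if P x then 1 else 0)); last by move=> x _; case: (P x).
rewrite -big_mkcond sumr_const; congr (_ *+ _); apply: eq_card => x; by rewrite inE.
Qed.

Lemma rho_mul (K : fieldType) n N (d1 d2 : diagram n) :
  is_diagram d1 -> is_diagram d2 ->
  (rho K N d1 *m rho K N d2) = (N%:R ^+ nloops d1 d2) *: rho K N (dcomp d1 d2).
Proof.
move=> D1 D2; apply/matrixP => a b; rewrite !mxE.
rewrite (eq_bigr (fun c => ((chi d1 (enum_val a) (enum_val c) && chi d2 (enum_val c) (enum_val b)))%:R)); last first.
  by move=> c _; rewrite !mxE -natrM mulnb.
rewrite (sum_enum (fun m => ((chi d1 (enum_val a) m && chi d2 m (enum_val b)))%:R)) sum_bool.
rewrite card_mid // count_compat ?consb_chi ?LR_nloops; last exact: cedge_sym.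
by case: (chi _ _ _); rewrite ?natrX ?mulr1 ?mulr0.
Qed.

Definition flipv n (v : vtx n) : vtx n := match v with inl t => inr t | inr t => inl t end.
Lemma flipvK n : involutive (@flipv n). Proof. by case. Qed.

Definition redg n (e d : diagram n) : rel (vtx n) :=
  fun u v => coblock e u v || coblock d (flipv u) (flipv v).

Lemma coblock_sym (T : finType) (P : {set {set T}}) : symmetric (coblock P).
Proof.
move=> u v; apply/exists_inP/exists_inP => -[B BP /andP [h1 h2]]; exists B => //; by rewrite h1 h2.
Qed.

Lemma redg_sym n (e d : diagram n) : symmetric (redg e d).
Proof. by move=> u v; rewrite /redg coblock_sym [coblock d _ _]coblock_sym. Qed.

Lemma labf_flip n N (i j : Lab n N) : [ffun v => labf i j (flipv v)] = labf j i.
Proof. by apply/ffunP => -[t|t]; rewrite !ffunE. Qed.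

Lemma rcompat_redg n N (e d : diagram n) (i j : Lab n N) :
  rcompat (redg e d) (labf i j) = chi e i j && chi d j i.
Proof.
rewrite /redg rcompatU rcompat_coblock (rcompat_comp (coblock d) _ (@flipvK n)).
by rewrite rcompat_coblock labf_flip.
Qed.

Lemma rho_trace (K : fieldType) n N (e d : diagram n) :
  \tr (rho K N.+1 e *m rho K N.+1 d) = (N.+1 ^ ex (redg e d))%:R.
Proof.
rewrite /mxtrace.
rewrite (eq_bigr (fun a : 'I_#|{: Lab n N.+1}| => \sum_(c < #|{: Lab n N.+1}|) (((chi e (enum_val a) (enum_val c) && chi d (enum_val c) (enum_val a)))%:R : K))); last first.
  move=> a _; rewrite !mxE; apply: eq_bigr => c _; by rewrite !mxE -natrM mulnb.
rewrite (sum_enum (fun i => \sum_(c < #|{: Lab n N.+1}|) (((chi e i (enum_val c) && chi d (enum_val c) i))%:R : K))).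
rewrite (eq_bigr (fun i : Lab n N.+1 => \sum_(j : Lab n N.+1) (((chi e i j && chi d j i))%:R : K))); last first.
  by move=> i _; rewrite (sum_enum (fun j => (((chi e i j && chi d j i))%:R : K))).
rewrite pair_big /= sum_bool -(count_C _ (redg_sym e d)); congr (_%:R).
have inj : injective (fun p : Lab n N.+1 * Lab n N.+1 => labf p.1 p.2).
  move=> [i j] [i' j'] /= /ffunP E; congr (_, _); apply/ffunP => t.
    by move: (E (inl t)); rewrite !ffunE.
  by move: (E (inr t)); rewrite !ffunE.
rewrite -(card_imset _ inj); apply: eq_card => L.
rewrite inE; apply/imsetP/idP => [[[i j]] | cL].
  by rewrite inE /= => h ->; rewrite rcompat_redg.
exists ([ffun t => L (inl t)], [ffun t => L (inr t)]).
  have E : labf [ffun t => L (inl t)] [ffun t => L (inr t)] = L by apply/ffunP => -[t|t]; rewrite !ffunE.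
  by rewrite inE /= -rcompat_redg E.
by apply/ffunP => -[t|t]; rewrite !ffunE.
Qed.

Close Scope ring_scope.

Open Scope ring_scope.

Definition embed (K : fieldType) n (p : {ffun diagram n -> {poly K}}) : PA {fraction {poly K}} n :=
  [ffun d => FracField.tofrac (p d)].

Definition pmulP (K : fieldType) n (p q : {ffun diagram n -> {poly K}}) : {ffun diagram n -> {poly K}} :=
  [ffun d => \sum_(d1 : diagram n) \sum_(d2 : diagram n)
     (if dcomp d1 d2 == d then p d1 * q d2 * 'X ^+ nloops d1 d2 else 0)].

Lemma embed_mul (K : fieldType) n (p q : {ffun diagram n -> {poly K}}) :
  pa_mul (xK K) (embed p) (embed q) = embed (pmulP p q).
Proof.
apply/ffunP => d; rewrite !ffunE rmorph_sum; apply: eq_bigr => d1 _.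
rewrite rmorph_sum; apply: eq_bigr => d2 _; rewrite !ffunE.
by case: ifP => _; rewrite ?rmorph0 // !rmorphM rmorphXn.
Qed.

Lemma embed_inj (K : fieldType) n : injective (@embed K n).
Proof.
move=> p q /ffunP E; apply/ffunP => d; move: (E d); rewrite !ffunE => /eqP.
by rewrite tofrac_eq => /eqP.
Qed.

Definition rhoP (K : fieldType) n N (p : {ffun diagram n -> {poly K}}) : 'M[K]_#|{: Lab n N}| :=
  \sum_(d : diagram n) (p d).[N%:R] *: rho K N d.

Definition suppD (K : fieldType) n (p : {ffun diagram n -> {poly K}}) :=
  forall d, p d != 0 -> is_diagram d.

Lemma rhoP_mul (K : fieldType) n N (p q : {ffun diagram n -> {poly K}}) :
  suppD p -> suppD q -> rhoP N (pmulP p q) = rhoP N p *m rhoP N q.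
Proof.
move=> Sp Sq; rewrite /rhoP mulmx_suml.
under eq_bigr => d _ do rewrite ffunE horner_sum scaler_suml.
rewrite exchange_big /=; apply: eq_bigr => d1 _.
under eq_bigr => d _ do rewrite horner_sum scaler_suml.
rewrite exchange_big /= mulmx_sumr; apply: eq_bigr => d2 _.
rewrite (bigD1 (dcomp d1 d2)) //= eqxx big1 ?addr0; last first.
  by move=> d /negbTE; rewrite eq_sym => ->; rewrite horner0 scale0r.
rewrite -scalemxAl -scalemxAr scalerA.
have [->|p0] := eqVneq (p d1) 0; first by rewrite !(mul0r, mulr0, horner0, scale0r).
have [->|q0] := eqVneq (q d2) 0; first by rewrite !(mul0r, mulr0, horner0, scale0r).
rewrite rho_mul; [|exact: Sp|exact: Sq].
apply/matrixP => a b; rewrite !mxE !hornerE; by [].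
Qed.

Close Scope ring_scope.

Definition flipd n (d : diagram n) : diagram n := [set (@flipv n @: (B : {set vtx n})) | B in d].
Definition wE n (e : diagram n) := ex (coblock e).
Definition frel n (d : diagram n) : rel (vtx n) := fun u v => coblock d (@flipv n u) (@flipv n v).
Definition uD n (d : diagram n) := ex (frel d).
Definition kap n (e d : diagram n) := ex (redg e d).

Lemma eq_rcompat (T : finType) (r1 r2 : rel T) N (L : {ffun T -> 'I_N}) :
  r1 =2 r2 -> rcompat r1 L = rcompat r2 L.
Proof.
move=> E; apply: eq_forallb => u; apply: eq_forallb => v; by rewrite E.
Qed.

Lemma frel_sym n (d : diagram n) : symmetric (frel d).
Proof. by move=> u v; rewrite /frel coblock_sym. Qed.

Lemma kap_le_w n (e d : diagram n) : kap e d <= wE e.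
Proof.
apply: ex_le; [exact: redg_sym | exact: coblock_sym|] => L.
by rewrite /redg rcompatU => /andP [].
Qed.

Lemma kap_le_u n (e d : diagram n) : kap e d <= uD d.
Proof.
apply: ex_le; [exact: redg_sym | exact: frel_sym|] => L.
by rewrite /redg rcompatU => /andP [].
Qed.

Lemma mem_flip n (B : {set vtx n}) u : (u \in @flipv n @: B) = (flipv u \in B).
Proof.
apply/imsetP/idP => [[b bB ->] | h]; first by rewrite flipvK.
by exists (flipv u); rewrite ?flipvK.
Qed.

Lemma coblock_flipd n (d : diagram n) u v : coblock (flipd d) u v = frel d u v.
Proof.
apply/exists_inP/exists_inP => [[B' /imsetP [B BP ->] /andP [h1 h2]] | [B BP /andP [h1 h2]]].
  by exists B => //; rewrite -!mem_flip h1 h2.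
by exists (@flipv n @: B); [apply/imsetP; exists B | rewrite !mem_flip h1 h2].
Qed.

Lemma wE_flipd n (d : diagram n) : wE (flipd d) = uD d.
Proof.
apply/eqP; rewrite eqn_leq; apply/andP; split; apply: ex_le;
  try exact: coblock_sym; try exact: frel_sym;
  by move=> L; rewrite (eq_rcompat _ (@coblock_flipd n d)).
Qed.

Lemma kap_flipd n (d : diagram n) : kap (flipd d) d = uD d.
Proof.
apply/eqP; rewrite eqn_leq kap_le_u /=; apply: ex_le; [exact: frel_sym | exact: redg_sym|].
move=> L h; rewrite /redg rcompatU h andbT.
by rewrite (eq_rcompat _ (@coblock_flipd n d)).
Qed.

Lemma kap_uniq n (d d0 : diagram n) : is_diagram d -> is_diagram d0 ->
  kap (flipd d0) d = wE (flipd d0) -> kap (flipd d0) d = uD d -> d = d0.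
Proof.
move=> D D0 h1 h2.
have S1 : forall L : {ffun vtx n -> 'I_2}, rcompat (redg (flipd d0) d) L -> rcompat (coblock (flipd d0)) L.
  by move=> L; rewrite /redg rcompatU => /andP [].
have S2 : forall L : {ffun vtx n -> 'I_2}, rcompat (redg (flipd d0) d) L -> rcompat (frel d) L.
  by move=> L; rewrite /redg rcompatU => /andP [].
have A1 := ex_eq_back (redg_sym (flipd d0) d) (@coblock_sym _ (flipd d0)) S1 h1.
have A2 := ex_eq_back (redg_sym (flipd d0) d) (@frel_sym n d) S2 h2.
have E : forall L : {ffun vtx n -> 'I_2}, rcompat (frel d) L = rcompat (frel d0) L.
  move=> L; rewrite -(eq_rcompat _ (@coblock_flipd n d0)).
  apply/idP/idP => h.
    by move: (A2 L h); rewrite /redg rcompatU => /andP [].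
  by move: (A1 L h); rewrite /redg rcompatU => /andP [].
apply: part_eq => // M.
move: (E [ffun v => M (@flipv n v)]).
rewrite /frel !(rcompat_comp (coblock _) _ (@flipvK n)) !rcompat_coblock.
have -> : [ffun v => [ffun v0 => M (@flipv n v0)] (@flipv n v)] = M.
  by apply/ffunP => v; rewrite !ffunE flipvK.
done.
Qed.

Lemma flipd_diagram n (d : diagram n) : is_diagram d -> is_diagram (flipd d).
Proof.
have inj : injective (@flipv n) by apply: can_inj (@flipvK n).
rewrite /is_diagram /flipd => D.
have E : @flipv n @: [set: vtx n] = [set: vtx n].
  apply/eqP; rewrite eqEsubset subsetT /=; apply/subsetP => v _.
  by apply/imsetP; exists (@flipv n v); rewrite ?inE ?flipvK.
by rewrite -E imset_partition.
Qed.

Lemma gact_flip n (v : vtx n) : gact (@flipv n v) = @flipv n (gact v).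
Proof. by case: v. Qed.

Lemma flipd_stable n (d : diagram n) : z2_stable d -> z2_stable (flipd d).
Proof.
move=> /forall_inP H; apply/forall_inP => B /imsetP [B0 B0d ->].
have -> : [set gact v | v in @flipv n @: B0] = @flipv n @: [set gact v | v in B0].
  rewrite -!imset_comp; apply: eq_imset => v /=; exact: gact_flip.
by apply/imsetP; exists [set gact v | v in B0] => //; apply: H.
Qed.

Open Scope ring_scope.

Lemma gram_zero (K : fieldType) n (p : {ffun diagram n -> {poly K}}) :
  (forall d, p d != 0 -> is_diagram d && z2_stable d) ->
  (forall e, is_diagram e -> z2_stable e -> \sum_(d : diagram n) p d * 'X^(kap e d) = 0) ->
  forall d, p d = 0.
Proof.
move=> Hs He d1; apply/eqP; apply/negPn/negP => pd1.
pose score d := (2 * size (p d) + uD d)%N.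
case: (@arg_maxnP _ d1 (fun d => p d != 0) score pd1) => d0 pd0 maxd0.
have /andP [D0 S0] := Hs d0 pd0.
set e := flipd d0.
have := He e (flipd_diagram D0) (flipd_stable S0).
rewrite (bigD1 d0) //=.
have Spos : size (p d0 * 'X^(kap e d0)) = (kap e d0 + size (p d0))%N := size_mulXn _ pd0.
have sz0 : (0 < size (p d0))%N by rewrite size_poly_gt0 pd0.
have rest : (size ((\sum_(d | d != d0) p d * 'X^(kap e d))%R) < size ((p d0 * 'X^(kap e d0))%R))%N.
  elim/big_ind: _ => [|q1 q2 h1 h2|d dd0].
  - by rewrite size_poly0 Spos; lia.
  - apply: leq_ltn_trans (size_polyD _ _) _; by rewrite gtn_max h1 h2.
  - have [->|pd] := eqVneq (p d) 0; first by rewrite mul0r size_poly0 Spos; lia.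
    rewrite size_mulXn // Spos.
    have k1 := kap_le_w e d; have k2 := kap_le_u e d.
    have w0 : wE e = uD d0 := wE_flipd d0.
    have k0 : kap e d0 = uD d0 := kap_flipd d0.
    have m := maxd0 d pd; rewrite /score in m.
    have /andP [D S] := Hs d pd.
    have nd : ~ (kap e d = wE e /\ kap e d = uD d).
      by move=> [h1 h2]; move/eqP: dd0; apply; apply: kap_uniq.
    lia.
move/eqP; rewrite -size_poly_eq0 size_polyDl // Spos; lia.
Qed.

Close Scope ring_scope.

Open Scope ring_scope.

Lemma foldl_embed (K : fieldType) n (s : seq {ffun diagram n -> {poly K}}) p :
  foldl (pa_mul (xK K)) (embed p) (map (@embed K n) s) = embed (foldl (@pmulP K n) p s).
Proof. by elim: s p => [|q s IH] p //=; rewrite embed_mul IH. Qed.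

Lemma embed0 (K : fieldType) n : @embed K n 0 = 0.
Proof. by apply/ffunP => d; rewrite !ffunE rmorph0. Qed.

Lemma supp_of (K : fieldType) n (S : pred (PA {fraction {poly K}} n))
  (HS : forall f, S f -> forall d, f d != 0 -> is_diagram d) p :
  S (embed p) -> suppD p.
Proof. by move=> Sp d pd; apply: (HS _ Sp); rewrite ffunE tofrac_eq0. Qed.

Lemma rhoP_foldl (K : fieldType) n N (S : pred (PA {fraction {poly K}} n))
  (HS : forall f, S f -> forall d, f d != 0 -> is_diagram d)
  (I : PA {fraction {poly K}} n -> Prop) :
  is_ideal S (pa_mul (xK K)) I ->
  forall s p, I (embed p) -> (forall q, q \in s -> I (embed q)) ->
  rhoP N (foldl (@pmulP K n) p s) = foldl (fun A q => A *m rhoP N q) (rhoP N p) s.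
Proof.
case=> Isub _ _ _ Imul; elim => [|q s IH] p Ip Is //=.
have Iq : I (embed q) by apply: Is; rewrite inE eqxx.
rewrite IH.
- by rewrite rhoP_mul //; apply: (supp_of HS); apply: Isub.
- by rewrite -embed_mul; case: (Imul _ _ (Isub _ Ip) Iq).
- by move=> q' q's; apply: Is; rewrite inE q's orbT.
Qed.

Lemma foldl_nseq (T U : Type) (f : T -> U -> T) a c m :
  foldl f a (nseq m c) = iter m (fun b => f b c) a.
Proof. by elim: m a => [|m IH] a //; rewrite iterSr -IH. Qed.

Lemma trace_zero (K : fieldType) n N (S : pred (PA {fraction {poly K}} n))
  (HS : forall f, S f -> forall d, f d != 0 -> is_diagram d)
  (I : PA {fraction {poly K}} n -> Prop) :
  is_ideal S (pa_mul (xK K)) I -> nilpotent_ideal (pa_mul (xK K)) I ->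
  forall c, I (embed c) -> \tr (rhoP N c) = 0.
Proof.
move=> Iid [m Hnil] c Ic.
have h' : forall b, b \in nseq m (embed c) -> I b.
  by move=> b; rewrite mem_nseq => /andP [_ /eqP ->].
have h := Hnil (embed c) (nseq m (embed c)) (size_nseq _ _) Ic h'.
move: h; rewrite -map_nseq foldl_embed -(embed0 K n) => /embed_inj E.
have Is : forall q, q \in nseq m c -> I (embed q) by move=> q; rewrite mem_nseq => /andP [_ /eqP ->].
have := rhoP_foldl N HS Iid Ic Is.
rewrite E foldl_nseq => R0.
apply: (@nil_trace K _ _ m); rewrite -R0 /rhoP.
by rewrite big1 // => d _; rewrite ffunE horner0 scale0r.
Qed.

Lemma tr_sum (K : fieldType) m (I : finType) (M : I -> 'M[K]_m) :
  \tr (\sum_i M i) = \sum_i \tr (M i).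
Proof.
rewrite /mxtrace (eq_bigr (fun j => \sum_i M i j j)); last by move=> j _; rewrite summxE.
by rewrite exchange_big.
Qed.

Lemma tr_mulZ (K : fieldType) m (A B : 'M[K]_m) a : \tr (A *m (a *: B)) = a * \tr (A *m B).
Proof.
rewrite /mxtrace mulr_sumr; apply: eq_bigr => i _; rewrite !mxE mulr_sumr.
by apply: eq_bigr => j _; rewrite !mxE mulrCA.
Qed.

Definition delta (K : fieldType) n (e : diagram n) : {ffun diagram n -> {poly K}} :=
  [ffun d => if d == e then 1 else 0].

Lemma trace_formula (K : fieldType) n N (e : diagram n) (p : {ffun diagram n -> {poly K}}) :
  is_diagram e -> suppD p ->
  \tr (rhoP N.+1 (pmulP (delta K e) p)) = (\sum_(d : diagram n) p d * 'X^(kap e d)).[N.+1%:R].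
Proof.
move=> De Sp.
have Sd : suppD (delta K e).
  by move=> d; rewrite ffunE; case: (eqVneq d e) => [-> //|]; rewrite eqxx.
rewrite rhoP_mul //.
have -> : rhoP N.+1 (delta K e) = rho K N.+1 e.
  rewrite /rhoP (bigD1 e) //= ffunE eqxx hornerC scale1r big1 ?addr0 //.
  by move=> d /negbTE dne; rewrite ffunE dne horner0 scale0r.
rewrite /rhoP mulmx_sumr tr_sum horner_sum; apply: eq_bigr => d _.
by rewrite tr_mulZ rho_trace hornerM hornerXn natrX.
Qed.

Close Scope ring_scope.

Open Scope ring_scope.
Open Scope quotient_scope.

Lemma frac_repr (R: idomainType) (f : {fraction R}) :
  exists p q, q != 0 /\ f * (FracField.tofrac q) = FracField.tofrac p.
Proof.
elim/quotW: f => x. exists (\n_x), (\d_x); split; first exact: denom_ratioP.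
change (FracField.mul (\pi_({fraction R}) x) (FracField.tofrac (\d_x)) = FracField.tofrac (\n_x)).
rewrite !piE. apply/eqmodP. rewrite /= FracField.equivfE /FracField.mulf /=.
rewrite !numden_Ratio ?mulf_neq0 ?oner_neq0 ?denom_ratioP //.
by rewrite !mulr1 mulrC.
Qed.


Lemma theorem4p5_aux (K : fieldType) (charK0 : [pchar K]%R =i pred0) (k : nat) (hk : (1 <= k)%N) :
  semisimple (@z2_alg {fraction {poly K}} k) (@pa_mul _ k.*2 (xK K)).
Proof.
move=> I Iid Inil a Ia.
have HS : forall f : PA {fraction {poly K}} k.*2, @z2_alg _ k f -> forall d, f d != 0 -> is_diagram d.
  move=> f Sf d fd; have H := Sf; rewrite /z2_alg /= in H.
  by move/forallP/(_ d): H; rewrite fd => /andP [].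
case: (Iid) => Isub I0 Iadd Iscale Imul.
have [f Hf] : exists f : diagram k.*2 -> ({poly K} * {poly K}),
    forall d, (f d).2 != 0 /\ a d * FracField.tofrac (f d).2 = FracField.tofrac (f d).1.
  apply: (@fin_all_exists _ (fun _ => ({poly K} * {poly K})%type) (fun d pq => pq.2 != 0 /\ a d * FracField.tofrac pq.2 = FracField.tofrac pq.1)) => d; have [p [q [qn e]]] := frac_repr (a d).
  by exists (p, q).
pose q := \prod_(d : diagram k.*2) (f d).2.
have qnz : q != 0 by apply/prodf_neq0 => d _; case: (Hf d).
pose p := [ffun d => (f d).1 * \prod_(d' | d' != d) (f d').2].
have Ep : FracField.tofrac q *: a = embed p.
  apply/ffunP => d; rewrite !ffunE /q (bigD1 d) //= !tofracM.
  case: (Hf d) => _ E; rewrite -E -mulrA [RHS]mulrC.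
  by [].
have Ip : I (embed p) by rewrite -Ep; apply: Iscale.
suff p0 : forall d, p d = 0.
  have pz : p = 0 by apply/ffunP => d; rewrite p0 ffunE.
  have : FracField.tofrac q *: a = 0 by rewrite Ep pz embed0.
  by move/eqP; rewrite scaler_eq0 tofrac_eq0 (negbTE qnz) /= => /eqP.
apply: gram_zero.
- move=> d pd; move: (Isub _ Ip) => /forallP /(_ d).
  by rewrite ffunE tofrac_eq0 pd.
- move=> e De Se; apply: (poly_nat_roots charK0) => N.
  rewrite -trace_formula //; last by apply: (supp_of HS); apply: Isub.
  apply: (trace_zero N.+1 HS Iid Inil).
  rewrite -embed_mul.
  have Sd : @z2_alg _ k (embed (delta K e)).
    rewrite /z2_alg /=; apply/forallP => d; apply/implyP; rewrite !ffunE.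
    by case: (eqVneq d e) => [-> _ | _]; rewrite ?De ?Se ?rmorph0 ?eqxx.
  by case: (Imul _ _ Sd Ip).
Qed.

Close Scope quotient_scope.
Close Scope ring_scope.
Unset Implicit Arguments.

Theorem theorem4p5 (K : fieldType) (charK0 : [pchar K]%R =i pred0) (k : nat) (hk : (1 <= k)%N) :
  semisimple (@z2_alg {fraction {poly K}} k) (@pa_mul _ k.*2 (xK K)).
Proof. exact: (@theorem4p5_aux K charK0 k hk). Qed.
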